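(* Fix $\beta\in(1,2)$, let $Y$ be the stationary random walk described in the context and $\mathcal C=\mathbb N^+$. Then for every $t\ge0$, $$\mathbf P[Y_0\in\mathcal C,\,Y_t\in\mathcal C]-\mathbf P[Y_0\in\mathcal C]^2\le\tfrac12\,\mathbf P\big[Y_s\in\mathcal C\ \forall s\in\{0,\dots,t\}\big],$$ and for every $\epsilon>0$ there is $t_0$ such that for all $t\ge t_0$, $$\mathbf P[Y_0\in\mathcal C,\,Y_t\in\mathcal C]-\mathbf P[Y_0\in\mathcal C]^2\ge\big(\tfrac12-\epsilon\big)\,\mathbf P\big[Y_s\in\mathcal C\ \forall s\in\{0,\dots,t\}\big].$$
   Context: The graph has vertex set $\mathbb Z^*=\mathbb Z\setminus\{0\}$ and edges: nearest-neighbour edges $\{n,n+1\}$ and $\{-(n+1),-n\}$ for $n\ge1$, the edge $\{-1,1\}$, and a self-loop at every vertex. Conductances: $c_{n,n+1}=c_{-(n+1),-n}=n^{-\beta}$ for $n\ge1$; $c_{-1,1}=c_{1,1}=c_{-1,-1}=1/2$; and for $|n|\ge2$ the self-loop conductance is $c_{n,n}=c_{n,n-1}+c_{n,n+1}$. The discrete-time walk moves from $x$ to $y$ with probability $c_{x,y}/\pi(x)$, where $\pi(x)=\sum_y c_{x,y}$ (self-loop counted once); it is run in stationarity (started from normalized $\pi$), with law $\mathbf P$. *)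

(* Defs.v *)
From Stdlib Require Import Reals ZArith List Bool.
Open Scope bool_scope.
Import ListNotations.
Open Scope R_scope.

(* Vertices of Z* are encoded as integers x <> 0; the integer 0 is a dummy
   vertex with zero conductance (never reached). Every edge {x,y} of the graph
   satisfies |x - y| <= 2, so neighbourhoods are enumerated by offsets. *)

Definition cedge (beta : R) (x y : Z) : R :=
  if ((x =? -1)%Z && (y =? 1)%Z) || ((x =? 1)%Z && (y =? -1)%Z) then 1/2
  else if (Z.abs (x - y) =? 1)%Z &&
          (((1 <=? x)%Z && (1 <=? y)%Z) || ((x <=? -1)%Z && (y <=? -1)%Z))
  then Rpower (IZR (Z.min (Z.abs x) (Z.abs y))) (- beta)
  else 0.

Definition cond (beta : R) (x y : Z) : R :=
  if (x =? y)%Z then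
    (if (Z.abs x =? 1)%Z then 1/2
     else if (x =? 0)%Z then 0
     else cedge beta x (x - 1) + cedge beta x (x + 1))
  else cedge beta x y.

Definition offsets : list Z := [(-2)%Z; (-1)%Z; 0%Z; 1%Z; 2%Z].

(* pi(x) = sum_y c_{x,y} (self-loop counted once). *)
Definition piw (beta : R) (x : Z) : R :=
  fold_right Rplus 0 (map (fun d => cond beta x (x + d)) offsets).

Definition trans (beta : R) (x y : Z) : R := cond beta x y / piw beta x.

Definition inC (x : Z) : R := if (1 <=? x)%Z then 1 else 0.

(* hitC beta t x = P_x[Y_t in C]. *)
Fixpoint hitC (beta : R) (t : nat) (x : Z) : R :=
  match t with
  | O => inC x
  | S t' => fold_right Rplus 0
              (map (fun d => trans beta x (x + d) * hitC beta t' (x + d)) offsets)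
  end.

(* stayC beta t x = P_x[Y_s in C for all s in {0,...,t}]. *)
Fixpoint stayC (beta : R) (t : nat) (x : Z) : R :=
  match t with
  | O => inC x
  | S t' => inC x * fold_right Rplus 0
              (map (fun d => trans beta x (x + d) * stayC beta t' (x + d)) offsets)
  end.

Definition posv (n : nat) : Z := Z.of_nat (S n).
Definition negv (n : nat) : Z := (- Z.of_nat (S n))%Z.

(* Series whose sums are: total mass of pi, unnormalized P[Y_0 in C],
   unnormalized P[Y_0 in C, Y_t in C], unnormalized P[Y_s in C, s<=t]. *)
Definition mass_series (beta : R) (n : nat) : R := piw beta (posv n) + piw beta (negv n).
Definition C_series (beta : R) (n : nat) : R := piw beta (posv n).
Definition joint_series (beta : R) (t : nat) (n : nat) : R :=
  piw beta (posv n) * hitC beta t (posv n).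
Definition stay_series (beta : R) (t : nat) (n : nat) : R :=
  piw beta (posv n) * stayC beta t (posv n).

(* Main.v *)
Require Import Defs.
From Stdlib Require Import Reals Lra Lia ZArith List.
Open Scope R_scope.

Section Zlev.
Variable beta : R.

Lemma e1 a : (-a =? -1)%Z = (a =? 1)%Z.
Proof. destruct (Z.eqb_spec (-a) (-1)); destruct (Z.eqb_spec a 1); try reflexivity; lia. Qed.
Lemma e2 a : (-a =? 1)%Z = (a =? -1)%Z.
Proof. destruct (Z.eqb_spec (-a) 1); destruct (Z.eqb_spec a (-1)); try reflexivity; lia. Qed.
Lemma e3 a : (1 <=? -a)%Z = (a <=? -1)%Z.
Proof. destruct (Z.leb_spec 1 (-a)); destruct (Z.leb_spec a (-1)); try reflexivity; lia. Qed.
Lemma e4 a : (-a <=? -1)%Z = (1 <=? a)%Z.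
Proof. destruct (Z.leb_spec (-a) (-1)); destruct (Z.leb_spec 1 a); try reflexivity; lia. Qed.
Lemma e5 a b : (-a =? -b)%Z = (a =? b)%Z.
Proof. destruct (Z.eqb_spec (-a) (-b)); destruct (Z.eqb_spec a b); try reflexivity; lia. Qed.
Lemma e6 a : (-a =? 0)%Z = (a =? 0)%Z.
Proof. destruct (Z.eqb_spec (-a) 0); destruct (Z.eqb_spec a 0); try reflexivity; lia. Qed.

Lemma cedge_opp x y : cedge beta (-x) (-y) = cedge beta x y.
Proof.
  unfold cedge.
  replace (-x - -y)%Z with (-(x-y))%Z by ring.
  rewrite !Z.abs_opp, !e1, !e2, !e3, !e4. simpl.
  rewrite (Bool.orb_comm (andb (x =? 1)%Z _)).
  rewrite (Bool.orb_comm (andb (1 <=? x)%Z _)). reflexivity.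
Qed.

Lemma cond_opp x y : cond beta (-x) (-y) = cond beta x y.
Proof.
  unfold cond. rewrite e5, Z.abs_opp, e6.
  destruct (x =? y)%Z; [|apply cedge_opp].
  destruct (Z.abs x =? 1)%Z; auto. destruct (x =? 0)%Z; auto.
  replace (- x - 1)%Z with (-(x+1))%Z by ring.
  replace (- x + 1)%Z with (-(x-1))%Z by ring.
  rewrite !cedge_opp. ring.
Qed.

Lemma cond_neg x d : cond beta (-x) (-x + d) = cond beta x (x + -d).
Proof. replace (-x + d)%Z with (-(x + -d))%Z by ring. apply cond_opp. Qed.

Lemma piw_opp x : piw beta (-x) = piw beta x.
Proof. unfold piw; simpl. rewrite !cond_neg. simpl.
  replace (x + - -2)%Z with (x+2)%Z by ring.
  replace (x + - -1)%Z with (x+1)%Z by ring.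
  replace (x + - 0)%Z with (x+0)%Z by ring. lra. Qed.

Lemma Rpower_pos a b : 0 < Rpower a b.
Proof. unfold Rpower; apply exp_pos. Qed.

Lemma cedge_nonneg x y : 0 <= cedge beta x y.
Proof. unfold cedge. destruct (_ || _)%bool; [lra|].
  destruct (_ && _)%bool; [left; apply Rpower_pos | lra]. Qed.

Lemma cond_nonneg x y : 0 <= cond beta x y.
Proof. unfold cond. destruct (x =? y)%Z; [|apply cedge_nonneg].
  destruct (Z.abs x =? 1)%Z; [lra|]. destruct (x =? 0)%Z; [lra|].
  pose proof (cedge_nonneg x (x-1)); pose proof (cedge_nonneg x (x+1)); lra. Qed.

Lemma piw_nonneg x : 0 <= piw beta x.
Proof. unfold piw; simpl. pose proof (cond_nonneg x (x + -2)).
  pose proof (cond_nonneg x (x + -1)). pose proof (cond_nonneg x (x + 0)).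
  pose proof (cond_nonneg x (x + 1)). pose proof (cond_nonneg x (x + 2)). lra. Qed.

Lemma trans_nonneg x y : 0 <= trans beta x y.
Proof. unfold trans, Rdiv. apply Rmult_le_pos. apply cond_nonneg.
  destruct (piw_nonneg x) as [H|H]. apply Rlt_le, Rinv_0_lt_compat; lra.
  rewrite <- H, Rinv_0; lra. Qed.

Ltac zb := repeat (match goal with
  | |- context [Z.eqb ?a ?b] => destruct (Z.eqb_spec a b)
  | |- context [Z.leb ?a ?b] => destruct (Z.leb_spec a b) end; try (exfalso; lia)); cbn [andb orb].

Lemma cond_succ x : (1 <= x)%Z -> cond beta x (x+1) = Rpower (IZR x) (-beta).
Proof. intro H. unfold cond, cedge. replace (Z.min (Z.abs x) (Z.abs (x+1))) with x by lia.
  zb; try reflexivity. Qed.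

Lemma cond_pred x : (2 <= x)%Z -> cond beta x (x + -1) = Rpower (IZR (x-1)) (-beta).
Proof. intro H. unfold cond, cedge. replace (Z.min (Z.abs x) (Z.abs (x + -1))) with (x-1)%Z by lia.
  zb; try reflexivity. Qed.

Lemma cond_m2 x : (2 <= x)%Z -> cond beta x (x + -2) = 0.
Proof. intro H. unfold cond, cedge. zb; try reflexivity. Qed.

Lemma cond_p2 x : (1 <= x)%Z -> cond beta x (x + 2) = 0.
Proof. intro H. unfold cond, cedge. zb; try reflexivity. Qed.

Lemma cond_x0 x : cond beta x 0 = 0.
Proof. unfold cond, cedge. zb; try reflexivity. Qed.

Lemma piw_ge_succ x : (1 <= x)%Z -> Rpower (IZR x) (-beta) <= piw beta x.
Proof. intro H. rewrite <- cond_succ by auto. unfold piw; simpl.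
  pose proof (cond_nonneg x (x + -2)).
  pose proof (cond_nonneg x (x + -1)). pose proof (cond_nonneg x (x + 0)).
  pose proof (cond_nonneg x (x + 2)). lra. Qed.

Lemma piw_pos x : x <> 0%Z -> 0 < piw beta x.
Proof. intro H. destruct (Z.le_gt_cases 1 x).
  eapply Rlt_le_trans; [apply Rpower_pos| apply piw_ge_succ; auto].
  rewrite <- piw_opp. eapply Rlt_le_trans; [apply Rpower_pos| apply piw_ge_succ; lia]. Qed.

Lemma trans_x0 x : trans beta x 0 = 0.
Proof. unfold trans. rewrite cond_x0. unfold Rdiv; ring. Qed.

Lemma trans_m2 x : (2 <= x)%Z -> trans beta x (x + -2) = 0.
Proof. intro. unfold trans. rewrite cond_m2 by auto. unfold Rdiv; ring. Qed.
Lemma trans_p2 x : (1 <= x)%Z -> trans beta x (x + 2) = 0.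
Proof. intro. unfold trans. rewrite cond_p2 by auto. unfold Rdiv; ring. Qed.

Lemma trans_opp x y : trans beta (-x) (-y) = trans beta x y.
Proof. unfold trans. rewrite cond_opp, piw_opp. reflexivity. Qed.

Lemma trans_sum x : x <> 0%Z ->
  fold_right Rplus 0 (map (fun d => trans beta x (x + d)) offsets) = 1.
Proof. intro H. pose proof (piw_pos x H). unfold trans. simpl.
  unfold piw in *; simpl in *. field. lra. Qed.

Lemma piw_1 : piw beta 1 = 2.
Proof. unfold piw, cond, cedge. simpl. replace (Z.min 1 2) with 1%Z by reflexivity.
  unfold Rpower. rewrite ln_1, Rmult_0_r, exp_0. lra. Qed.

Lemma trans_1m1 : trans beta 1 (-1) = 1/4.
Proof. unfold trans. rewrite piw_1. unfold cond, cedge; simpl. field. Qed.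
Lemma trans_11 : trans beta 1 1 = 1/4.
Proof. unfold trans. rewrite piw_1. unfold cond, cedge; simpl. field. Qed.

Lemma balance x : (1 <= x)%Z ->
  piw beta x * trans beta x (x+1) = piw beta (x+1) * trans beta (x+1) (x+1 + -1).
Proof. intro H. pose proof (piw_pos x ltac:(lia)). pose proof (piw_pos (x+1) ltac:(lia)).
  unfold trans. replace (x+1 + -1)%Z with x by ring.
  assert (cond beta (x+1) x = cond beta x (x+1)).
  { rewrite cond_succ by auto. unfold cond, cedge.
    replace (Z.min (Z.abs (x+1)) (Z.abs x)) with x by lia. zb; reflexivity. }
  rewrite H2. field. split; lra. Qed.

End Zlev.

Section Nlev.
Variable beta : R.

Lemma posv_S p : posv (S p) = (posv p + 1)%Z.
Proof. unfold posv; lia. Qed.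
Lemma posv_pred q : posv q = (posv (S q) + -1)%Z.
Proof. unfold posv; lia. Qed.
Lemma posv0 : posv 0 = 1%Z.
Proof. reflexivity. Qed.
Lemma posv_ge p : (1 <= posv p)%Z.
Proof. unfold posv; lia. Qed.

Definition tr p d := trans beta (posv p) (posv p + d).
Definition Kop (f : nat -> R) (p : nat) : R :=
  match p with
  | O => tr 0 0 * f 0%nat + tr 0 1 * f 1%nat
  | S q => tr p (-1) * f q + tr p 0 * f p + tr p 1 * f (S p)
  end.
Definition sg t p := stayC beta t (posv p).
Definition gm t p := hitC beta t (posv p) - 1/2.
Definition pw p := piw beta (posv p).

Lemma stay_nonpos t x : (x <= 0)%Z -> stayC beta t x = 0.
Proof. intro H. destruct t; cbn [stayC]; unfold inC; destruct (Z.leb_spec 1 x); try lia; ring. Qed.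

Lemma inC_pos p : inC (posv p) = 1.
Proof. unfold inC. destruct (Z.leb_spec 1 (posv p)); [reflexivity| unfold posv in *; lia]. Qed.

Lemma tr00 : tr 0 0 = 1/4.
Proof. unfold tr. rewrite posv0. apply trans_11. Qed.
Lemma tr01 : tr 0 1 = 1/2.
Proof. pose proof (trans_sum beta 1 ltac:(lia)). cbn [fold_right map offsets] in H.
  replace (1 + -2)%Z with (-1)%Z in H by reflexivity.
  replace (1 + -1)%Z with 0%Z in H by reflexivity.
  replace (1 + 0)%Z with 1%Z in H by reflexivity.
  rewrite trans_1m1, trans_x0, trans_11, trans_p2 in H by lia.
  unfold tr. rewrite posv0. lra. Qed.

Lemma row1 p : (1 <= p)%nat -> tr p (-1) + tr p 0 + tr p 1 = 1.
Proof. intro Hp. pose proof (trans_sum beta (posv p) ltac:(unfold posv; lia)).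
  cbn [fold_right map offsets] in H.
  rewrite trans_m2, trans_p2 in H by (unfold posv; lia). unfold tr. lra. Qed.

Lemma sg_S t p : sg (S t) p = Kop (sg t) p.
Proof. unfold sg, Kop, tr. cbn [stayC fold_right map offsets]. rewrite inC_pos.
  destruct p as [|q].
  - rewrite posv0. change (posv 1) with 2%Z.
    replace (1 + -2)%Z with (-1)%Z by reflexivity.
    replace (1 + -1)%Z with 0%Z by reflexivity.
    replace (1 + 0)%Z with 1%Z by reflexivity.
    replace (1 + 1)%Z with 2%Z by reflexivity.
    rewrite stay_nonpos by lia. rewrite trans_x0, trans_p2 by lia. ring.
  - rewrite trans_m2, trans_p2 by (unfold posv; lia).
    rewrite (posv_pred q), (posv_S (S q)), !Z.add_0_r. ring.
Qed.

Lemma hit_anti t : forall x, x <> 0%Z -> hitC beta t (-x) = 1 - hitC beta t x.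
Proof. induction t; intros x Hx.
  - cbn [hitC]. unfold inC. destruct (Z.leb_spec 1 (-x)); destruct (Z.leb_spec 1 x); try lia; ring.
  - assert (T : forall y, trans beta x y * hitC beta t (-y) = trans beta x y * (1 - hitC beta t y)).
    { intro y. destruct (Z.eq_dec y 0). subst. rewrite trans_x0. ring. rewrite IHt by auto. ring. }
    pose proof (trans_sum beta x Hx). cbn [hitC fold_right map offsets] in *.
    replace (-x + -2)%Z with (-(x + 2))%Z by ring.
    replace (-x + -1)%Z with (-(x + 1))%Z by ring.
    replace (-x + 0)%Z with (-(x + 0))%Z by ring.
    replace (-x + 1)%Z with (-(x + -1))%Z by ring.
    replace (-x + 2)%Z with (-(x + -2))%Z by ring.
    rewrite !trans_opp, !T. lra.
Qed.

Lemma gm_S t p : gm (S t) p = Kop (gm t) p - match p with O => 1/4 * gm t 0 | S _ => 0 end.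
Proof. unfold gm, Kop.
  pose proof (trans_sum beta (posv p) ltac:(unfold posv; lia)) as HS.
  cbn [hitC fold_right map offsets] in *. unfold tr in *.
  destruct p as [|q].
  - rewrite posv0 in *. change (posv 1) with 2%Z.
    replace (1 + -2)%Z with (-1)%Z in * by reflexivity.
    replace (1 + -1)%Z with 0%Z in * by reflexivity.
    replace (1 + 0)%Z with 1%Z in * by reflexivity.
    replace (1 + 1)%Z with 2%Z in * by reflexivity.
    replace (hitC beta t (-1)) with (1 - hitC beta t 1) by (rewrite <- (hit_anti t 1) by lia; reflexivity).
    rewrite !trans_x0, !trans_p2, !trans_1m1, !trans_11 in * by lia. lra.
  - rewrite !trans_m2, !trans_p2 in * by (unfold posv; lia).
    rewrite (posv_pred q), (posv_S (S q)), !Z.add_0_r in *. lra.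
Qed.

Lemma far t : forall x, (Z.of_nat t < x)%Z -> stayC beta t x = 1 /\ hitC beta t x = 1.
Proof. induction t; intros x Hx.
  - cbn [stayC hitC]. unfold inC. destruct (Z.leb_spec 1 x); [split; reflexivity| lia].
  - pose proof (trans_sum beta x ltac:(lia)) as HS.
    cbn [stayC hitC fold_right map offsets] in *.
    unfold inC. destruct (Z.leb_spec 1 x); [|lia].
    rewrite trans_m2 in * by lia.
    rewrite !(proj1 (IHt (x + -1)%Z ltac:(lia))), !(proj1 (IHt (x + 0)%Z ltac:(lia))),
      !(proj1 (IHt (x + 1)%Z ltac:(lia))), !(proj1 (IHt (x + 2)%Z ltac:(lia))).
    rewrite !(proj2 (IHt (x + -1)%Z ltac:(lia))), !(proj2 (IHt (x + 0)%Z ltac:(lia))),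
      !(proj2 (IHt (x + 1)%Z ltac:(lia))), !(proj2 (IHt (x + 2)%Z ltac:(lia))).
    split; lra.
Qed.

Lemma sg_far t p : (t <= p)%nat -> sg t p = 1.
Proof. intro H. unfold sg. apply (far t). unfold posv; lia. Qed.
Lemma gm_far t p : (t <= p)%nat -> gm t p = 1/2.
Proof. intro H. unfold gm. rewrite (proj2 (far t (posv p) ltac:(unfold posv; lia))). lra. Qed.

Lemma tr_nonneg p d : 0 <= tr p d.
Proof. apply trans_nonneg. Qed.

Lemma Kop_ext f g p : (forall q, f q = g q) -> Kop f p = Kop g p.
Proof. intro H. destruct p; unfold Kop; rewrite !H; reflexivity. Qed.

Lemma Kop_mono f g p : (forall q, f q <= g q) -> Kop f p <= Kop g p.
Proof. intro H. pose proof (tr_nonneg 0 0). pose proof (tr_nonneg 0 1).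
  pose proof (tr_nonneg p (-1)). pose proof (tr_nonneg p 0). pose proof (tr_nonneg p 1).
  destruct p; unfold Kop.
  - pose proof (H 0%nat); pose proof (H 1%nat).
    apply Rplus_le_compat; apply Rmult_le_compat_l; auto.
  - pose proof (H p); pose proof (H (S p)); pose proof (H (S (S p))).
    repeat apply Rplus_le_compat; apply Rmult_le_compat_l; auto.
Qed.

Lemma Kop_lin a b f g p : Kop (fun q => a * f q + b * g q) p = a * Kop f p + b * Kop g p.
Proof. destruct p; unfold Kop; ring. Qed.

Lemma Kop_scal a f p : Kop (fun q => a * f q) p = a * Kop f p.
Proof. destruct p; unfold Kop; ring. Qed.

Lemma Kop_0 p : Kop (fun _ => 0) p = 0.
Proof. destruct p; unfold Kop; ring. Qed.

Lemma Kop_1 p : Kop (fun _ => 1) p = 1 - match p with O => 1/4 | S _ => 0 end.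
Proof. destruct p; unfold Kop.
  - rewrite tr00, tr01; lra.
  - pose proof (row1 (S p) ltac:(lia)). lra. Qed.

Lemma bounds t p : 0 <= gm t p /\ gm t p <= sg t p / 2 /\ sg t p <= 1 /\ 0 <= sg t p.
Proof. revert p; induction t; intro p.
  - unfold gm, sg. cbn [hitC stayC]. rewrite inC_pos. lra.
  - assert (Hs1 : sg (S t) p <= 1).
    { rewrite sg_S. pose proof (Kop_1 p).
      assert (Kop (sg t) p <= Kop (fun _ => 1) p) by (apply Kop_mono; intro q; apply IHt).
      destruct p; lra. }
    assert (Hs0 : 0 <= sg (S t) p).
    { rewrite sg_S, <- (Kop_0 p). apply Kop_mono; intro q; apply IHt. }
    assert (Hup : Kop (gm t) p <= sg (S t) p / 2).
    { rewrite sg_S. replace (Kop (sg t) p / 2) with (Kop (fun q => (/2) * sg t q) p)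
        by (rewrite Kop_scal; lra). apply Kop_mono; intro q; pose proof (IHt q); lra. }
    assert (Hlo : 0 <= Kop (gm t) p).
    { rewrite <- (Kop_0 p). apply Kop_mono; intro q; apply IHt. }
    rewrite gm_S. destruct p.
    + pose proof (IHt 0%nat). pose proof (IHt 1%nat).
      unfold Kop in *. rewrite tr00, tr01 in *.
      repeat split; try lra.
    + repeat split; lra.
Qed.

Lemma sg_decr t p : sg (S t) p <= sg t p.
Proof. revert p; induction t; intro p.
  - pose proof (bounds 1 p). unfold sg at 2. cbn [stayC]. rewrite inC_pos. lra.
  - rewrite (sg_S (S t)), (sg_S t). apply Kop_mono. apply IHt.
Qed.

Definition wd t p := sg t p / 2 - gm t p.

Lemma wd_S t p : wd (S t) p = Kop (wd t) p + match p with O => 1/4 * gm t 0 | S _ => 0 end.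
Proof. unfold wd. rewrite sg_S, gm_S.
  replace (Kop (fun p0 : nat => sg t p0 / 2 - gm t p0) p) with
    (Kop (fun q => (/2) * sg t q + (-1) * gm t q) p) by (apply Kop_ext; intro; lra).
  rewrite Kop_lin. destruct p; lra. Qed.

Lemma wd_far t p : (t <= p)%nat -> wd t p = 0.
Proof. intro. unfold wd. rewrite sg_far, gm_far by auto. lra. Qed.

Lemma balance_n M : pw (S M) * tr (S M) (-1) = pw M * tr M 1.
Proof. unfold pw, tr. rewrite (posv_S M). symmetry. apply balance. apply posv_ge. Qed.

Lemma dual f g M : sum_f_R0 (fun p => pw p * (f p * Kop g p - Kop f p * g p)) M
   = pw M * tr M 1 * (f M * g (S M) - f (S M) * g M).
Proof. induction M.
  - simpl. unfold Kop. ring.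
  - rewrite tech5, IHM. rewrite <- balance_n. unfold Kop at 1 2. ring.
Qed.

Fixpoint iterK (n : nat) (h : nat -> R) : nat -> R :=
  match n with O => h | S n' => iterK n' (Kop h) end.

Lemma iterK_comm n : forall h p, iterK n (Kop h) p = Kop (iterK n h) p.
Proof. induction n; intros h p. reflexivity. simpl. apply IHn. Qed.

Lemma iterK_1 n : forall p, iterK n (fun _ => 1) p = sg n p.
Proof. induction n; intro p.
  - unfold sg. cbn [stayC]. rewrite inC_pos. reflexivity.
  - change (iterK (S n) (fun _ => 1) p) with (iterK n (Kop (fun _ => 1)) p).
    rewrite iterK_comm, sg_S. apply Kop_ext. apply IHn. Qed.

Fixpoint sumn (f : nat -> R) (n : nat) : R :=
  match n with O => 0 | S n' => sumn f n' + f n' end.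

Lemma sumn_ext_lt f g n : (forall k, (k < n)%nat -> f k = g k) -> sumn f n = sumn g n.
Proof. induction n; intro H; simpl. reflexivity. rewrite IHn; [rewrite H by lia; reflexivity| intros; apply H; lia]. Qed.

Lemma sum_delta (c : R) (h : nat -> R) M :
  sum_f_R0 (fun p => pw p * (match p with O => c | S _ => 0 end * h p)) M = pw 0 * c * h 0%nat.
Proof. induction M. simpl. ring. rewrite tech5, IHM. ring. Qed.

Lemma sum_zero M : sum_f_R0 (fun _ => 0) M = 0.
Proof. rewrite sum_cte. ring. Qed.

Lemma repr t : forall h M, (t <= M)%nat ->
  sum_f_R0 (fun p => pw p * (wd t p * h p)) M
  = pw 0 * sumn (fun k => 1/4 * gm k 0 * iterK (t - S k) h 0%nat) t.
Proof. induction t; intros h M HM.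
  - transitivity (sum_f_R0 (fun _ => 0) M); [|rewrite sum_zero; simpl sumn; ring].
    apply sum_eq. intros i _.
    unfold wd, sg, gm. cbn [stayC hitC]. rewrite inC_pos. replace (1 / 2 - (1 - 1 / 2)) with 0 by lra. ring.
  - assert (E : forall p, pw p * (wd (S t) p * h p) =
       pw p * (wd t p * Kop h p)
       - pw p * (wd t p * Kop h p - Kop (wd t) p * h p)
       + pw p * (match p with O => 1/4 * gm t 0 | S _ => 0 end * h p)).
    { intro p. rewrite wd_S. ring. }
    rewrite (sum_eq _ _ _ (fun i _ => E i)).
    rewrite sum_plus, minus_sum, dual, sum_delta, IHt by lia.
    rewrite (wd_far t M), (wd_far t (S M)) by lia.
    simpl sumn. rewrite Nat.sub_diag. simpl iterK.
    rewrite (sumn_ext_lt (fun k => 1/4 * gm k 0 * iterK (S t - S k) h 0%nat)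
       (fun k => 1/4 * gm k 0 * iterK (t - S k) (Kop h) 0%nat)).
    + ring.
    + intros k Hk. replace (S t - S k)%nat with (S (t - S k)) by lia. reflexivity.
Qed.

Lemma mass t : forall M, (t <= M)%nat ->
  sum_f_R0 (fun p => pw p * sg t p) M = sum_f_R0 pw M - pw 0 * (1/4) * sumn (fun k => sg k 0%nat) t.
Proof. induction t; intros M HM.
  - transitivity (sum_f_R0 pw M); [|simpl sumn; ring].
    apply sum_eq. intros i _. unfold sg. cbn [stayC]. rewrite inC_pos. ring.
  - assert (E : forall p, pw p * sg (S t) p =
       pw p * (1 * Kop (sg t) p - Kop (fun _ => 1) p * sg t p)
       + pw p * sg t p
       - pw p * (match p with O => 1/4 | S _ => 0 end * sg t p)).
    { intro p. rewrite sg_S, Kop_1. destruct p; ring. }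
    rewrite (sum_eq _ _ _ (fun i _ => E i)).
    rewrite minus_sum, sum_plus, (dual (fun _ => 1)), sum_delta, IHt by lia.
    rewrite (sg_far t M), (sg_far t (S M)) by lia.
    simpl sumn. ring.
Qed.

End Nlev.

Lemma sumn_le f g n : (forall k, (k < n)%nat -> f k <= g k) -> sumn f n <= sumn g n.
Proof. induction n; intro H; simpl. lra. apply Rplus_le_compat. apply IHn; intros; apply H; lia. apply H; lia. Qed.
Lemma sumn_plus f g n : sumn (fun k => f k + g k) n = sumn f n + sumn g n.
Proof. induction n; simpl. ring. rewrite IHn. ring. Qed.
Lemma sumn_scal a f n : sumn (fun k => a * f k) n = a * sumn f n.
Proof. induction n; simpl. ring. rewrite IHn. ring. Qed.
Lemma sumn_nonneg f n : (forall k, 0 <= f k) -> 0 <= sumn f n.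
Proof. induction n; intro H; simpl. lra. pose proof (H n). pose proof (IHn H). lra. Qed.
Lemma sumn_first f n : sumn f (S n) = f 0%nat + sumn (fun k => f (S k)) n.
Proof. induction n. simpl. ring. change (sumn f (S (S n))) with (sumn f (S n) + f (S n)).
  rewrite IHn. simpl. ring. Qed.
Lemma sumn_rev f n : sumn (fun k => f (n - S k)%nat) n = sumn f n.
Proof. induction n. reflexivity.
  rewrite sumn_first. simpl sumn at 2.
  replace (S n - 1)%nat with n by lia. rewrite <- IHn.
  change (fun k => f (S n - S (S k))%nat) with (fun k => f (n - S k)%nat). ring. Qed.

Lemma sumn_const c n : sumn (fun _ => c) n = INR n * c.
Proof. induction n. simpl; ring. simpl sumn. rewrite IHn, S_INR. ring. Qed.

Lemma mono_decr (u : nat -> R) : (forall k, u (S k) <= u k) -> forall i j, (i <= j)%nat -> u j <= u i.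
Proof. intros Hd i j Hij. induction Hij. lra. pose proof (Hd m). lra. Qed.

Lemma avg_bound (u : nat -> R) h : (forall k, u (S k) <= u k) -> INR (S h) * u h <= sumn u (S h).
Proof. intro Hd. rewrite <- sumn_const. apply sumn_le. intros k Hk.
  apply (mono_decr u Hd). lia. Qed.

Lemma conv_bound (u : nat -> R) U t :
  (forall k, 0 <= u k) -> (forall k, u (S k) <= u k) -> (forall n, sumn u n <= U) ->
  (1 <= t)%nat -> sumn (fun k => u k * u (t - S k)%nat) t <= 4 * U * U / INR t.
Proof. intros H0 Hd HU Ht.
  pose proof (mono_decr u Hd) as Hm.
  assert (Hex : exists h, (t = 2 * h \/ t = 2 * h + 1)%nat).
  { destruct (Nat.Even_or_Odd t) as [[h Hh]|[h Hh]]; exists h; lia. }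
  destruct Hex as [h Hh].
  assert (Hterm : forall k, (k < t)%nat -> u k * u (t - S k)%nat <= u h * (u k + u (t - S k)%nat)).
  { intros k Hk. pose proof (H0 k); pose proof (H0 (t - S k)%nat); pose proof (H0 h).
    destruct (Nat.le_gt_cases h k).
    - pose proof (Hm h k ltac:(lia)); nra.
    - pose proof (Hm h (t - S k)%nat ltac:(lia)); nra. }
  pose proof (sumn_le _ _ _ Hterm) as Hs.
  rewrite sumn_scal, sumn_plus, (sumn_rev u t) in Hs.
  pose proof (avg_bound u h Hd). pose proof (HU (S h)). pose proof (HU t).
  pose proof (sumn_nonneg u t H0). pose proof (H0 h).
  assert (Ht0 : 0 < INR t) by (apply lt_0_INR; lia).
  assert (Hth : INR t <= 2 * INR (S h)).
  { rewrite S_INR. destruct Hh; subst; rewrite ?plus_INR, mult_INR; simpl; lra. }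
  assert (HSh : 0 < INR (S h)) by (apply lt_0_INR; lia).
  assert (U0 : 0 <= U) by lra.
  apply (Rmult_le_reg_r (INR t)); auto. unfold Rdiv. rewrite Rmult_assoc, Rinv_l, Rmult_1_r by lra.
  assert (u h * (2 * sumn u t) <= u h * (2 * U)) by nra.
  assert (u h * INR t <= 2 * U) by nra.
  nra.
Qed.

Lemma cv_const c : Un_cv (fun _ => c) c.
Proof. intros e He. exists 0%nat. intros. unfold Rdist. rewrite Rminus_diag, Rabs_R0. lra. Qed.

Lemma inf_lin f g a b x y : infinite_sum f a -> infinite_sum g b ->
  infinite_sum (fun n => x * f n + y * g n) (x * a + y * b).
Proof. intros Hf Hg.
  assert (E : forall N, sum_f_R0 (fun n => x * f n + y * g n) N = x * sum_f_R0 f N + y * sum_f_R0 g N).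
  { intro N. rewrite sum_plus, !scal_sum. f_equal; apply sum_eq; intros; ring. }
  intros e He. destruct (CV_plus _ _ _ _ (CV_mult _ _ _ _ (cv_const x) Hf) (CV_mult _ _ _ _ (cv_const y) Hg) e He) as [N HN].
  exists N. intros n Hn. rewrite E. apply HN. auto. Qed.

Lemma lim_le_const f l A : infinite_sum f l -> (forall N, sum_f_R0 f N <= A) -> l <= A.
Proof. intros H HA. eapply Rle_cv_lim; [exact HA | exact H | apply cv_const]. Qed.

Lemma lim_ge f l N : infinite_sum f l -> (forall n, 0 <= f n) -> sum_f_R0 f N <= l.
Proof. intros H H0. apply sum_incr; auto. Qed.

Lemma sum_mono_N f M M' : (forall n, 0 <= f n) -> (M <= M')%nat -> sum_f_R0 f M <= sum_f_R0 f M'.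
Proof. intros H0 HM. induction HM. lra. rewrite tech5. pose proof (H0 (S m)). lra. Qed.

Lemma sum_ge_block f q t : forall n, (forall p, 0 <= f p) -> (forall p, (t <= p <= t + n)%nat -> q <= f p) ->
  INR (S n) * q <= sum_f_R0 f (t + n).
Proof. induction n; intros H0 Hq.
  - rewrite Nat.add_0_r. simpl INR. destruct t. simpl. pose proof (Hq 0%nat ltac:(lia)). lra.
    rewrite tech5. pose proof (cond_pos_sum f t H0). pose proof (Hq (S t) ltac:(lia)). lra.
  - replace (t + S n)%nat with (S (t + n)) by lia. rewrite tech5, S_INR.
    pose proof (IHn H0 (fun p Hp => Hq p ltac:(lia))). pose proof (Hq (S (t+n)) ltac:(lia)). lra.
Qed.

Lemma inf_ext f g l : (forall n, f n = g n) -> infinite_sum f l -> infinite_sum g l.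
Proof. intros E H e He. destruct (H e He) as [N HN]. exists N. intros n Hn.
  rewrite <- (sum_eq f g n (fun i _ => E i)). apply HN; auto. Qed.

Theorem mainTheorem7 (beta : R) (Hb1 : 1 < beta) (Hb2 : beta < 2)
  (Z m : R) (HZ : infinite_sum (mass_series beta) Z)
  (Hm : infinite_sum (C_series beta) m) :
  (forall (t : nat) (j s : R),
     infinite_sum (joint_series beta t) j ->
     infinite_sum (stay_series beta t) s ->
     j / Z - (m / Z) ^ 2 <= (1 / 2) * (s / Z))
  /\
  (forall eps : R, 0 < eps ->
     exists t0 : nat, forall (t : nat) (j s : R), (t0 <= t)%nat ->
       infinite_sum (joint_series beta t) j ->
       infinite_sum (stay_series beta t) s ->
       (1 / 2 - eps) * (s / Z) <= j / Z - (m / Z) ^ 2).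
Proof.
  rename Z into Zt.
  assert (HC0 : forall n, 0 <= C_series beta n) by (intro; apply piw_nonneg).
  assert (Hpw0 : pw beta 0 = 2) by (unfold pw; rewrite posv0; apply piw_1).
  assert (Hm2 : 2 <= m).
  { pose proof (lim_ge _ _ 0 Hm HC0). simpl in H. unfold C_series in H. fold (pw beta 0) in H. lra. }
  assert (HZm : Zt = 2 * m).
  { apply (uniqueness_sum (mass_series beta)); auto.
    replace (2 * m) with (2 * m + 0 * m) by ring.
    apply (inf_ext (fun n => 2 * C_series beta n + 0 * C_series beta n)).
    - intro n. unfold mass_series, C_series. change (negv n) with (- posv n)%Z.
      rewrite piw_opp. ring.
    - apply inf_lin; auto. }
  assert (Hwnn : forall t n, 0 <= pw beta n * (wd beta t n * 1)).
  { intros t n. pose proof (bounds beta t n). pose proof (piw_nonneg beta (posv n)).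
    unfold wd, pw. apply Rmult_le_pos; auto. lra. }
  split.
  - intros t j s Hj Hs.
    assert (Hle : j <= /2 * m + /2 * s).
    { eapply Rle_cv_lim; [| exact Hj | exact (inf_lin _ _ _ _ (/2) (/2) Hm Hs)].
      intro N. apply sum_growing. intro n. unfold joint_series, C_series, stay_series.
      pose proof (bounds beta t n). pose proof (piw_nonneg beta (posv n)).
      unfold gm, sg in *. nra. }
    rewrite HZm.
    assert (E : j/(2*m) - (m/(2*m))^2 - 1/2*(s/(2*m)) = (j - /2*m - /2*s) * /(2*m)) by (field; lra).
    assert (0 < /(2*m)) by (apply Rinv_0_lt_compat; lra). nra.
  - intros eps Heps.
    set (L := 36 * m * m / (eps * (2 - beta))).
    destruct (INR_archimed 1 (exp L) ltac:(lra)) as [n0 Hn0].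
    exists (S n0). intros t j s Ht Hj Hs.
    set (u := fun k => sg beta k 0).
    assert (Hu0 : forall k, 0 <= u k) by (intro k; apply (bounds beta k 0)).
    assert (Hud : forall k, u (S k) <= u k) by (intro k; apply sg_decr).
    assert (HU : forall n, sumn u n <= 2 * m).
    { intro n. pose proof (mass beta n n (le_n n)).
      assert (0 <= sum_f_R0 (fun p => pw beta p * sg beta n p) n).
      { apply cond_pos_sum. intro p. pose proof (bounds beta n p). pose proof (piw_nonneg beta (posv p)).
        unfold pw. nra. }
      pose proof (lim_ge _ _ n Hm HC0). change (sum_f_R0 (C_series beta) n) with (sum_f_R0 (pw beta) n) in H1.
      rewrite Hpw0 in H. unfold u. lra. }
    assert (Ht1 : (1 <= t)%nat) by lia.
    pose proof (conv_bound u (2*m) t Hu0 Hud HU Ht1) as Hconv.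
    assert (HtP : 0 < INR t) by (apply lt_0_INR; lia).
    assert (HW : forall M, sum_f_R0 (fun p => pw beta p * (wd beta t p * 1)) M <= 4 * m * m / INR t).
    { assert (Hbig : forall M, (t <= M)%nat -> sum_f_R0 (fun p => pw beta p * (wd beta t p * 1)) M <= 4 * m * m / INR t).
      { intros M HM. rewrite (repr beta t (fun _ => 1) M HM), Hpw0.
        assert (sumn (fun k => 1/4 * gm beta k 0 * iterK beta (t - S k) (fun _ => 1) 0%nat) t
                <= sumn (fun k => /8 * (u k * u (t - S k)%nat)) t).
        { apply sumn_le. intros k Hk. rewrite iterK_1. pose proof (bounds beta k 0).
          pose proof (Hu0 (t - S k)%nat). unfold u in *. nra. }
        rewrite sumn_scal in H.
        assert (4 * (2 * m) * (2 * m) / INR t = 16 * (m * m / INR t)) by (field; lra).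
        assert (4 * m * m / INR t = 4 * (m * m / INR t)) by (field; lra). lra. }
      intro M. destruct (Nat.le_gt_cases t M). apply Hbig; auto.
      eapply Rle_trans; [apply (sum_mono_N _ M t); auto; lia | apply Hbig; lia]. }
    assert (HWlim : infinite_sum (fun p => pw beta p * (wd beta t p * 1)) (1 * (/2 * s + -1 * j) + /2 * m)).
    { apply (inf_ext (fun n => 1 * (/2 * stay_series beta t n + -1 * joint_series beta t n) + /2 * C_series beta n)).
      - intro n. unfold stay_series, joint_series, C_series, wd, sg, gm, pw. field.
      - apply inf_lin; auto. apply inf_lin; auto. }
    pose proof (lim_le_const _ _ _ HWlim HW) as HWb.
    set (a := INR (2 * t + 1)).
    assert (Ha : 0 < a) by (unfold a; apply lt_0_INR; lia).
    set (q := Rpower a (- beta)).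
    assert (Hsq : INR (S t) * q <= s).
    { eapply Rle_trans; [| apply (lim_ge _ _ (t + t) Hs)].
      - apply sum_ge_block.
        + intro p. unfold stay_series. pose proof (bounds beta t p). pose proof (piw_nonneg beta (posv p)). unfold sg in *. nra.
        + intros p Hp. unfold stay_series. fold (sg beta t p). rewrite sg_far by lia. rewrite Rmult_1_r.
          eapply Rle_trans; [| apply piw_ge_succ; apply posv_ge].
          unfold q. rewrite !Rpower_Ropp. apply Rinv_le_contravar. apply Rpower_pos.
          apply Rle_Rpower_l. lra. split.
          * unfold posv. rewrite <- INR_IZR_INZ. apply lt_0_INR; lia.
          * unfold posv, a. rewrite <- INR_IZR_INZ. apply le_INR; lia.
      - intro p. unfold stay_series. pose proof (bounds beta t p). pose proof (piw_nonneg beta (posv p)). unfold sg in *. nra. }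
    set (y := ln a).
    assert (Hay : exp y = a) by (apply exp_ln; auto).
    assert (Haq : a * a * q = exp ((2 - beta) * y)).
    { unfold q, Rpower. fold y. rewrite <- Hay at 1 2. rewrite <- !exp_plus. f_equal. ring. }
    assert (HaI : a = 2 * INR t + 1) by (unfold a; rewrite plus_INR, mult_INR; simpl; lra).
    assert (HyL : L < y).
    { rewrite <- (ln_exp L). apply ln_increasing. apply exp_pos.
      assert (INR n0 < INR t) by (apply lt_INR; lia). lra. }
    assert (HL : (2 - beta) * L = 36 * m * m / eps) by (unfold L; field; lra).
    assert (Hexp : (2 - beta) * y <= exp ((2 - beta) * y)) by (pose proof (exp_ineq1_le ((2-beta)*y)); lra).
    assert (H36 : 36 * m * m / eps <= a * a * q).
    { rewrite Haq. rewrite <- HL. assert ((2-beta) * L <= (2 - beta) * y) by (apply Rmult_le_compat_l; lra). lra. }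
    assert (Hq : 0 < q) by apply Rpower_pos.
    assert (Ht2 : 1 <= INR t) by (apply (le_INR 1); lia).
    assert (Hkey : 4 * m * m / INR t <= eps * s).
    { assert (36 * m * m <= eps * (a * a * q)).
      { apply (Rmult_le_compat_l eps) in H36; [|lra].
        replace (eps * (36 * m * m / eps)) with (36 * m * m) in H36 by (field; lra). lra. }
      assert (a * a <= 9 * (INR t * INR (S t))) by (rewrite S_INR, HaI; nra).
      assert (eps * q * (a*a) <= eps * q * (9 * (INR t * INR (S t)))).
      { apply Rmult_le_compat_l; auto. apply Rmult_le_pos; lra. }
      assert (4 * m * m <= eps * (INR t * (INR (S t) * q))) by nra.
      assert (4 * m * m / INR t <= eps * (INR (S t) * q)).
      { apply (Rmult_le_reg_r (INR t)); auto. unfold Rdiv. rewrite Rmult_assoc, Rinv_l, Rmult_1_r by lra. nra. }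
      nra. }
    rewrite HZm.
    assert (E : j/(2*m) - (m/(2*m))^2 - (1/2 - eps)*(s/(2*m)) = (j - /2*m - /2*s + eps * s) * /(2*m)) by (field; lra).
    assert (0 < /(2*m)) by (apply Rinv_0_lt_compat; lra). nra.
Qed.
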